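(* Let $(G,\sigma)$ be an RBMG explained by the leaf-colored tree $(T,\sigma)$. If $(T,\sigma)$ is least resolved w.r.t. $(G,\sigma)$, then every inner edge $e=uv\in E(T)$ (with $v$ a child of $u$) satisfies $\sigma(L(T(v)))\cap\sigma(L(T(u))\setminus L(T(v)))\ne\emptyset$.
   Context: A planted phylogenetic tree $T$ is a rooted tree with distinguished root $0_T$ of degree $1$, all other non-leaf vertices of degree $\ge3$; $L(T)$ its leaves (excluding $0_T$), $|L(T)|\ge2$, $V^0(T)$ its inner vertices; an inner edge is an edge with both endpoints in $V^0(T)$. $\preceq_T$ is the ancestor order towards $0_T$; $T(v)$, $\mathrm{child}(v)$, $\mathrm{lca}_T$ as usual. $\sigma$ maps $L(T)$ to a set of colors. A leaf $y$ is a best match of leaf $x$ if $\sigma(x)\ne\sigma(y)$ and $\mathrm{lca}_T(x,y)\preceq_T\mathrm{lca}_T(x,y')$ for all leaves $y'$ with $\sigma(y')=\sigma(y)$; the RBMG $G(T,\sigma)$ is the undirected vertex-colored graph on $L(T)$ whose edges are the reciprocal best match pairs. $(T,\sigma)$ explains $(G,\sigma)$ if $G(T,\sigma)=(G,\sigma)$. $(T,\sigma)$ is least resolved if for every inner edge $e$, the tree $T_e$ obtained by contracting $e$ satisfies $G(T_e,\sigma)\ne G(T,\sigma)$. *)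

(* Defs.v *)
From mathcomp Require Import all_boot.
Set Implicit Arguments. Unset Strict Implicit. Unset Printing Implicit Defensive.

(* A rooted tree is encoded on a finite type V by a vertex set S : {set V},
   a root r \in S and a parent function par : V -> V with par r = r. *)

Definition anc (V : finType) (par : V -> V) (x y : V) : Prop :=
  exists k, iter k par x = y.

Definition children (V : finType) (par : V -> V) (S : {set V}) (r x : V)
  : {set V} := [set y in S | (y != r) && (par y == x)].

Definition leaves (V : finType) (par : V -> V) (S : {set V}) (r : V)
  : {set V} := [set x in S | (x != r) && (children par S r x == set0)].

(* planted phylogenetic tree: root 0_T of degree 1, every other non-leaf
   vertex has degree >= 3 (one parent + >= 2 children), at least 2 leaves *)
Definition is_planted_tree (V : finType) (S : {set V}) (r : V) (par : V -> V)
  : Prop :=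
  [/\ r \in S, par r = r,
      {in S, forall x, par x \in S} &
      {in S, forall x, anc par x r}] /\
  [/\ #|children par S r r| = 1,
      {in S, forall x, x != r -> children par S r x != set0 ->
                       2 <= #|children par S r x|}
    & 2 <= #|leaves par S r|].

Definition inner (V : finType) (par : V -> V) (S : {set V}) (r x : V) : Prop :=
  [/\ x \in S, x != r & x \notin leaves par S r].

Definition is_lca (V : finType) (par : V -> V) (S : {set V}) (x y z : V)
  : Prop :=
  [/\ z \in S, anc par x z, anc par y z &
      forall w, w \in S -> anc par x w -> anc par y w -> anc par z w].

Definition best_match (V : finType) (C : Type) (par : V -> V) (S : {set V})
  (r : V) (sigma : V -> C) (x y : V) : Prop :=
  [/\ x \in leaves par S r, y \in leaves par S r, sigma x <> sigma y &
      forall y', y' \in leaves par S r -> sigma y' = sigma y ->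
      forall z z', is_lca par S x y z -> is_lca par S x y' z' -> anc par z z'].

Definition rbm (V : finType) (C : Type) (par : V -> V) (S : {set V})
  (r : V) (sigma : V -> C) (x y : V) : Prop :=
  best_match par S r sigma x y /\ best_match par S r sigma y x.

(* contraction of the edge uv (v child of u): vertex v is removed and its
   children are reattached to u.  The contracted tree is (S :\ v, contract). *)
Definition contract (V : finType) (par : V -> V) (u v : V) : V -> V :=
  fun x => if par x == v then u else par x.

Definition least_resolved (V : finType) (C : Type) (S : {set V}) (r : V)
  (par : V -> V) (sigma : V -> C) : Prop :=
  forall u v, inner par S r u -> inner par S r v -> par v = u ->
    ~ (forall x y, x \in leaves par S r -> y \in leaves par S r ->
         (rbm par S r sigma x y <->
          rbm (contract par u v) (S :\ v) r sigma x y)).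

(* Main.v *)
Require Import Defs.
From mathcomp Require Import all_boot.
From Stdlib Require Import Classical.
Set Implicit Arguments. Unset Strict Implicit.

Lemma min_ex (P : nat -> Prop) n : P n -> exists m, P m /\ forall k, P k -> m <= k.
Proof.
elim: n {-2}n (leqnn n) => [|N IH] n Hn Pn.
  exists n; split => // k _; move: Hn; rewrite leqn0 => /eqP ->.
  by [].
case: (classic (exists k, k < n /\ P k)) => [[k [Hk Pk]]|H].
  by apply: (IH k) => //; rewrite -ltnS; apply: leq_trans Hk Hn.
exists n; split => // k Pk; rewrite leqNgt; apply/negP => Hk; apply: H; by exists k.
Qed.

Lemma iter_fix (V : Type) (p : V -> V) r k : p r = r -> iter k p r = r.
Proof. by move=> H; elim: k => //= k ->. Qed.

Lemma anc_refl (V : finType) (p : V -> V) x : anc p x x.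
Proof. by exists 0. Qed.

Lemma anc_trans (V : finType) (p : V -> V) x y z : anc p x y -> anc p y z -> anc p x z.
Proof. by case=> i <- [j <-]; exists (j + i); rewrite iterD. Qed.

Lemma anc_step (V : finType) (p : V -> V) x : anc p x (p x).
Proof. by exists 1. Qed.

Lemma anc_chain (V : finType) (p : V -> V) x a b : anc p x a -> anc p x b -> anc p a b \/ anc p b a.
Proof.
case=> i <- [j <-]; case: (leqP i j) => H.
  left; exists (j - i); by rewrite -iterD subnK.
right; exists (i - j); rewrite -iterD subnK //; exact: ltnW.
Qed.

Lemma anc_antisym (V : finType) (S : {set V}) r (p : V -> V) a b :
  is_planted_tree S r p -> a \in S -> anc p a b -> anc p b a -> a = b.
Proof.
move=> [[rS pr _ toR] _] aS [i Hi] [j Hj].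
have Hn : forall n, iter (n * (j + i)) p a = a.
  elim=> // n IHn; by rewrite mulSn iterD IHn iterD Hi Hj.
case: (toR a aS) => k Hk.
case: i Hi Hn => [|i] Hi Hn; first by [].
have : iter (k * (j + i.+1)) p a = r.
  have -> : k * (j + i.+1) = (k * (j + i.+1) - k) + k.
    by rewrite subnK // leq_pmulr // addnS.
  by rewrite iterD Hk iter_fix.
rewrite Hn => ar; rewrite ar in Hi; by rewrite -Hi iter_fix.
Qed.

Lemma iter_in (V : finType) (S : {set V}) r (p : V -> V) x k :
  is_planted_tree S r p -> x \in S -> iter k p x \in S.
Proof. move=> [[_ _ pS _] _] xS; elim: k => //= k IH; exact: pS. Qed.

Lemma lca_ex (V : finType) (S : {set V}) r (p : V -> V) x y :
  is_planted_tree S r p -> x \in S -> y \in S -> exists m, is_lca p S x y m.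
Proof.
move=> T xS yS; have [[rS pr _ toR] _] := T.
have [k Hk] := toR x xS.
have Hyk : anc p y (iter k p x) by rewrite Hk; exact: toR.
have [j0 [Pj0 Hmin]] := @min_ex (fun j => anc p y (iter j p x)) k Hyk.
exists (iter j0 p x); split; first exact: (iter_in j0 T xS).
  by exists j0.
  by [].
move=> w wS [j Hj] Hyw; rewrite -Hj in Hyw *.
have := Hmin j Hyw => Hle; exists (j - j0); by rewrite -iterD subnK.
Qed.

Lemma lca_uniq (V : finType) (S : {set V}) r (p : V -> V) x y z z' :
  is_planted_tree S r p -> is_lca p S x y z -> is_lca p S x y z' -> z = z'.
Proof.
move=> T [zS xz yz mz] [z'S xz' yz' mz'].
apply: (anc_antisym T zS); [exact: mz | exact: mz'].
Qed.

Lemma ance_fwd (V : finType) (p : V -> V) u v x k :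
  u != v -> p v = u -> x != v ->
  exists j, iter k (contract p u v) x = iter j p x /\ iter k (contract p u v) x != v.
Proof.
move=> uv pv xv; elim: k => [|k [j [Hj Hv]]]; first by exists 0.
rewrite /= Hj /contract; case: eqP => H.
  exists j.+2; split; first by rewrite /= H.
  by [].
exists j.+1; split => //; by apply/eqP.
Qed.

Lemma anc_e_iff (V : finType) (p : V -> V) u v x y :
  u != v -> p v = u -> x != v -> y != v ->
  (anc (contract p u v) x y <-> anc p x y).
Proof.
move=> uv pv xv yv; split.
  case=> k <-; have [j [Hj _]] := ance_fwd k uv pv xv; by exists j.
case=> j; elim: j {-2}j (leqnn j) x xv => [|N IH] j Hj x xv Hx.
  by move: Hj; rewrite leqn0 => /eqP Hj; subst j; exists 0.
case: j Hj Hx => [|j] Hj Hx; first by exists 0.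
rewrite iterSr in Hx.
case: (eqVneq (p x) v) => H.
  rewrite H in Hx; case: j Hj Hx => [|j] Hj Hx; first by rewrite -Hx eqxx in yv.
  rewrite iterSr pv in Hx.
  have [k Hk] := IH j (ltnW Hj) u uv Hx.
  exists k.+1; by rewrite iterSr /contract H eqxx.
have [k Hk] := IH j Hj (p x) H Hx.
exists k.+1; rewrite iterSr /contract; by rewrite (negbTE H).
Qed.

Lemma anc_vu (V : finType) (p : V -> V) u v w :
  p v = u -> anc p v w -> w != v -> anc p u w.
Proof.
move=> pv [[|k] Hk] wv; first by rewrite -Hk eqxx in wv.
exists k; by rewrite -pv -iterSr.
Qed.

Lemma inner_uv (V : finType) (S : {set V}) r (p : V -> V) u v :
  is_planted_tree S r p -> inner p S r u -> inner p S r v -> p v = u -> u != v.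
Proof.
move=> T _ [vS vr _] pv; apply/eqP => E.
have [[rS pr _ toR] _] := T.
have [k Hk] := toR v vS.
have : iter k p v = v by elim: k {Hk} => //= k ->; rewrite pv E.
by rewrite Hk => rv; rewrite rv eqxx in vr.
Qed.

Lemma child_of (V : finType) (S : {set V}) r (p : V -> V) v :
  inner p S r v -> exists c, [/\ c \in S, c != r & p c = v].
Proof.
case=> vS vr; rewrite inE vS vr /= => /set0Pn [c]; rewrite inE => /and3P [cS cr /eqP pc].
by exists c.
Qed.

Lemma leaves_e (V : finType) (S : {set V}) r (p : V -> V) u v z :
  is_planted_tree S r p -> inner p S r u -> inner p S r v -> p v = u ->
  (z \in leaves (contract p u v) (S :\ v) r) = (z \in leaves p S r).
Proof.
move=> T Iu Iv pv; have uv := inner_uv T Iu Iv pv.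
have [c [cS cr pc]] := child_of Iv.
have cv : c != v by apply/eqP => E; move: pc; rewrite E pv => /eqP; rewrite (negbTE uv).
case: Iu => uS ur uL; case: Iv => vS vr vL.
rewrite !inE /children.
apply/idP/idP.
- case/and3P => /andP [zv zS] zr /eqP Ce; rewrite zS zr /=.
  apply/eqP/setP => y; rewrite !inE; apply/negP => /and3P [yS yr /eqP py].
  case: (eqVneq y v) => yv.
  + subst y; subst z.
    move/setP: Ce => /(_ c); by rewrite !inE cS cr cv /contract pc pv !eqxx.
  + move/setP: Ce => /(_ y); rewrite !inE yS yr yv /contract py (negbTE zv) eqxx.
    by [].
- case/and3P => zS zr /eqP Ce.
  have zv : z != v by apply/eqP => E; move: vL; rewrite -E inE zS zr /children Ce eqxx.
  rewrite zv zS zr /=; apply/eqP/setP => y; rewrite !inE; apply/negP => /and3P [/andP [yv yS] yr /eqP E].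
  move: E; rewrite /contract; case: (eqVneq (p y) v) => py E.
  + move/setP: Ce => /(_ v); by rewrite !inE vS vr pv E eqxx.
  + move/setP: Ce => /(_ y); by rewrite !inE yS yr E eqxx.
Qed.

Lemma lca_e (V : finType) (S : {set V}) r (p : V -> V) u v x y m :
  is_planted_tree S r p -> inner p S r u -> inner p S r v -> p v = u ->
  x != v -> y != v -> is_lca p S x y m ->
  forall z, is_lca (contract p u v) (S :\ v) x y z <-> z = (if m == v then u else m).
Proof.
move=> T Iu Iv pv xv yv [mS xm ym mmin]; have uv := inner_uv T Iu Iv pv.
have uS : u \in S by case: Iu.
set fm := if m == v then u else m.
have fmv : fm != v by rewrite /fm; case: (eqVneq m v).
have fmS : fm \in S by rewrite /fm; case: (eqVneq m v).
have anc_fm : forall w, anc p x w -> anc p m w -> w != v -> anc p fm w.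
  move=> w _ mw wv; rewrite /fm; case: eqP => // E; subst m; exact: anc_vu mw wv.
have xfm : anc p x fm by rewrite /fm; case: eqP => // E; subst m; apply: anc_trans xm _; rewrite -pv; exact: anc_step.
have yfm : anc p y fm by rewrite /fm; case: eqP => // E; subst m; apply: anc_trans ym _; rewrite -pv; exact: anc_step.
have Hfm : is_lca (contract p u v) (S :\ v) x y fm.
  split; first by rewrite !inE fmv fmS.
  - by apply/(anc_e_iff uv pv xv fmv).
  - by apply/(anc_e_iff uv pv yv fmv).
  move=> w; rewrite !inE => /andP [wv wS] /(anc_e_iff uv pv xv wv) xw /(anc_e_iff uv pv yv wv) yw.
  apply/(anc_e_iff uv pv fmv wv); apply: anc_fm => //; exact: mmin.
move=> z; split; last by move=> ->.
move=> [zS xz yz zmin].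
move: (zS); rewrite !inE => /andP [zv zS'].
case: Hfm => _ xfe yfe fmin.
have H1 := zmin fm ltac:(by rewrite !inE fmv fmS) xfe yfe.
have H2 := fmin z zS xz yz.
move/(anc_e_iff uv pv zv fmv): H1 => H1.
move/(anc_e_iff uv pv fmv zv): H2 => H2.
exact: (anc_antisym T zS' H1 H2).
Qed.

Lemma leaf_S (V : finType) (S : {set V}) r (p : V -> V) x :
  x \in leaves p S r -> x \in S.
Proof. by rewrite inE => /andP []. Qed.

Lemma leaf_nv (V : finType) (S : {set V}) r (p : V -> V) x v :
  inner p S r v -> x \in leaves p S r -> x != v.
Proof. by case=> _ _ vL xL; apply/eqP => E; rewrite -E xL in vL. Qed.

Lemma core (V : finType) (C : Type) (S : {set V}) (r : V)
  (par : V -> V) (sigma : V -> C) u v x y y' :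
  is_planted_tree S r par -> inner par S r u -> inner par S r v -> par v = u ->
  ~ (exists a b,
      [/\ a \in leaves par S r, anc par a v &
           b \in leaves par S r] /\
      [/\ anc par b u, ~ anc par b v & sigma a = sigma b]) ->
  x \in leaves par S r -> y \in leaves par S r -> y' \in leaves par S r ->
  sigma y' = sigma y ->
  ((forall z z', is_lca par S x y z -> is_lca par S x y' z' -> anc par z z') <->
   (forall z z', is_lca (contract par u v) (S :\ v) x y z ->
       is_lca (contract par u v) (S :\ v) x y' z' -> anc (contract par u v) z z')).
Proof.
move=> T Iu Iv pv Hno xL yL y'L sy.
have uv := inner_uv T Iu Iv pv.
have xS := leaf_S xL. have yS := leaf_S yL. have y'S := leaf_S y'L.
have xv := leaf_nv Iv xL. have yv := leaf_nv Iv yL. have y'v := leaf_nv Iv y'L.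
have uS : u \in S by case: Iu.
have vS : v \in S by case: Iv.
have [m Hm] := lca_ex T xS yS.
have [m' Hm'] := lca_ex T xS y'S.
have He := lca_e T Iu Iv pv xv yv Hm.
have He' := lca_e T Iu Iv pv xv y'v Hm'.
have vu : anc par v u by rewrite -pv; exact: anc_step.
have fv : forall k, (if k == v then u else k) != v by move=> k; case: (eqVneq k v).
have step : (forall z z', is_lca par S x y z -> is_lca par S x y' z' -> anc par z z') <-> anc par m m'.
  split; first by move=> H; exact: H.
  move=> H z z' Hz Hz'; by rewrite -(lca_uniq T Hm Hz) -(lca_uniq T Hm' Hz').
have stepe : (forall z z', is_lca (contract par u v) (S :\ v) x y z ->
       is_lca (contract par u v) (S :\ v) x y' z' -> anc (contract par u v) z z')
     <-> anc par (if m == v then u else m) (if m' == v then u else m').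
  rewrite -(anc_e_iff uv pv (fv m) (fv m')); split.
    move=> H; apply: H; [exact/He | exact/He'].
  by move=> H z z' /He -> /He' ->.
suff key : anc par m m' <-> anc par (if m == v then u else m) (if m' == v then u else m').
  clear -step stepe key; tauto.
case: Hm => mS xm ym mmin; case: Hm' => m'S xm' y'm' mmin'.
split => H.
  case: (eqVneq m v) => mv; case: (eqVneq m' v) => m'v.
  - exact: anc_refl.
  - subst m; exact: anc_vu H m'v.
  - subst m'; exact: anc_trans H vu.
  - exact: H.
case: (eqVneq m v) => mv; case: (eqVneq m' v) => m'v.
- by rewrite mv m'v; exact: anc_refl.
- subst m; rewrite eqxx (negbTE m'v) in H; exact: anc_trans vu H.
- subst m'; rewrite eqxx (negbTE mv) in H.
  case: (anc_chain xm xm') => // Hvm.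
  have mu : m = u := anc_antisym T mS H (anc_vu pv Hvm mv).
  subst m; exfalso; apply: Hno; exists y', y; split; split => //.
  + move=> yv'; have : anc par u v := mmin v vS xm' yv'.
    move=> uv'; by rewrite (anc_antisym T uS uv' vu) eqxx in uv.
- by rewrite (negbTE mv) (negbTE m'v) in H.
Qed.

Lemma bm_iff (V : finType) (C : Type) (S : {set V}) (r : V)
  (par : V -> V) (sigma : V -> C) u v x y :
  is_planted_tree S r par -> inner par S r u -> inner par S r v -> par v = u ->
  ~ (exists a b,
      [/\ a \in leaves par S r, anc par a v &
           b \in leaves par S r] /\
      [/\ anc par b u, ~ anc par b v & sigma a = sigma b]) ->
  x \in leaves par S r -> y \in leaves par S r ->
  (best_match par S r sigma x y <-> best_match (contract par u v) (S :\ v) r sigma x y).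
Proof.
move=> T Iu Iv pv Hno xL yL.
have LE := fun z => leaves_e z T Iu Iv pv.
rewrite /best_match !LE; split; case=> _ _ sxy H; split => // y' y'L sy'.
  rewrite LE in y'L; apply/(core T Iu Iv pv Hno xL yL y'L sy'); exact: H.
rewrite -LE in y'L; apply/(core T Iu Iv pv Hno xL yL _ sy'); first by rewrite -LE.
exact: H.
Qed.

Theorem mainTheorem10 (V : finType) (C : Type) (S : {set V}) (r : V)
  (par : V -> V) (sigma : V -> C) (G : V -> V -> Prop) :
  is_planted_tree S r par ->
  (* (T, sigma) explains (G, sigma): G = G(T, sigma) on L(T) *)
  (forall x y, x \in leaves par S r -> y \in leaves par S r ->
     (G x y <-> rbm par S r sigma x y)) ->
  least_resolved S r par sigma ->
  forall u v, inner par S r u -> inner par S r v -> par v = u ->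
    exists a b,
      [/\ a \in leaves par S r, anc par a v &
           b \in leaves par S r] /\
      [/\ anc par b u, ~ anc par b v & sigma a = sigma b].
Proof.
move=> T _ LR u v Iu Iv pv.
apply: NNPP => Hno.
apply: (LR u v Iu Iv pv) => x y xL yL.
have B1 := bm_iff (sigma:=sigma) T Iu Iv pv Hno xL yL.
have B2 := bm_iff (sigma:=sigma) T Iu Iv pv Hno yL xL.
rewrite /rbm; clear -B1 B2; tauto.
Qed.
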